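(* Let $\alpha$ be a formula without points-to atoms with $\mathcal P(\alpha)\subseteq\mathcal P_r$, $s$ a store and $h':\mathcal L\to\mathcal L^{\kappa+\nu+\mu}$ a heap. If $(s,h')\models_{\mathcal R_r}\widehat\alpha$, then every location $\ell\in\mathrm{dom}(h')$ with $h'(\ell)=\vec\ell_\bot$ has a connection in $h'$, i.e. there is $\ell'\in\mathrm{dom}(h')$ with $h'(\ell')\ne\vec\ell_\bot$ such that $\ell$ is one of the last $\mu$ components of $h'(\ell')$.
   Context: Separation logic: variables, constant $\bot$; formulas from $x\not\approx x'$, $x\approx x'$, $x\mapsto(t_1,\dots,t_k)$, predicate atoms, $*$, $\vee$, $\exists$. SID: finite set of rules $p(x_1,\dots,x_n)\Leftarrow\pi$. $\mathcal P(\phi)$: predicates reachable (reflexively) from those of $\phi$ through rule bodies. Locations $\mathcal L$ with $\ell_\bot$; stores map variables and $\bot$ to locations with $s(x)=\ell_\bot$ iff $x=\bot$; heaps are finite partial maps $\mathcal L\to\mathcal L^k$ avoiding $\ell_\bot$ in the domain; standard SL semantics $\models$ (predicate atoms via rules with existential variables interpreted by an extension of the store). A rule is connected iff its body is $x_1\mapsto(t_1,\dots,t_k)*\rho$ with $\rho$ free of points-to atoms and every predicate atom in $\rho$ has first argument among $t_1,\dots,t_k$. Standing assumptions: $\mathcal R$ is an SID of progressing rules $p(x_1,\dots,x_n)\Leftarrow x_1\mapsto(y_1,\dots,y_\kappa)*\rho$ (part of a safe entailment problem $(\phi,\psi,\mathcal R)$), $\mathcal P_r=\mathcal P(\psi)$;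 $\vec w=(w_1,\dots,w_\nu)$, $\nu>0$, are variables not occurring in $\mathcal R$; stores considered have $w_1,\dots,w_\nu$ in their domain (hence $s(w_i)\neq\ell_\bot$); every rule of $\mathcal R$ has exactly $\mu$ existential variables. $\vec\bot$ ($\vec\ell_\bot$) is $\kappa+\nu+\mu$ copies of $\bot$ ($\ell_\bot$); $\mathsf{bot}$ is a unary predicate with single rule $\mathsf{bot}(x)\Leftarrow x\mapsto\vec\bot$, included in $\mathcal R_r$. Each $p\in\mathcal P_r$ of arity $n$ gets a fresh $\widehat p$ of arity $n+\nu$; $\widehat\alpha$ replaces each atom $p(x_1,\dots,x_n)$ by $\widehat p(x_1,\dots,x_n,\vec w)$. $\widehat{\mathcal R}_0$ consists of the rules $\widehat p(x_1,\dots,x_n,\vec w)\Leftarrow x_1\mapsto(y_1,\dots,y_\kappa,\vec w,z_1,\dots,z_\mu)\sigma*\widehat\rho\sigma*\mathop{*}_{i\in I}\mathsf{bot}(z_i)*\mathop{*}_{x\in\mathrm{dom}(\sigma)}x\approx\sigma(x)$ for every rule $p(x_1,\dots,x_n)\Leftarrow x_1\mapsto(y_1,\dots,y_\kappa)*\rho$ of $\mathcal R$ with $p\in\mathcal P_r$, fresh $z_1,\dots,z_\mu$, substitution $\sigma$ with $\mathrm{dom}(\sigma)\subseteq\mathrm{fv}(\rho)\setminus\{x_1\}$, $\mathrm{img}(\sigma)\subseteq\{w_1,\dots,w_\nu\}$, and $I\subseteq\{1,\dots,\mu\}$. $\mathcal R_r$ is the set of connected rules of $\widehat{\mathcal R}_0$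 together with the $\mathsf{bot}$ rule. *)

(* Defs.v *)
From Stdlib Require Import List Arith.
Import ListNotations.
Set Implicit Arguments.

Definition var := nat.
Definition loc := nat.
Definition lbot : loc := 0.

Inductive term := Bot | V (x : var).

Inductive form (P : Type) :=
| FNeq (t1 t2 : term)
| FEq (t1 t2 : term)
| FPto (t : term) (ts : list term)
| FPred (p : P) (ts : list term)
| FStar (f g : form P)
| FOr (f g : form P)
| FEx (x : var) (f : form P).
Arguments FNeq {P}. Arguments FEq {P}. Arguments FPto {P}.
Arguments FPred {P}. Arguments FStar {P}. Arguments FOr {P}. Arguments FEx {P}.

Record rule (P : Type) := mkRule { r_pred : P; r_params : list var; r_body : form P }.
Arguments mkRule {P}.

Definition term_vars (t : term) : list var :=
  match t with Bot => [] | V x => [x] end.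

Fixpoint fv {P} (f : form P) : list var :=
  match f with
  | FNeq t1 t2 | FEq t1 t2 => term_vars t1 ++ term_vars t2
  | FPto t ts => term_vars t ++ flat_map term_vars ts
  | FPred _ ts => flat_map term_vars ts
  | FStar f g | FOr f g => fv f ++ fv g
  | FEx x f => remove Nat.eq_dec x (fv f)
  end.

Fixpoint allvars {P} (f : form P) : list var :=
  match f with
  | FNeq t1 t2 | FEq t1 t2 => term_vars t1 ++ term_vars t2
  | FPto t ts => term_vars t ++ flat_map term_vars ts
  | FPred _ ts => flat_map term_vars ts
  | FStar f g | FOr f g => allvars f ++ allvars g
  | FEx x f => x :: allvars f
  end.

Fixpoint pred_atoms {P} (f : form P) : list (P * list term) :=
  match f with
  | FPred p ts => [(p, ts)]
  | FStar f g | FOr f g => pred_atoms f ++ pred_atoms g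
  | FEx _ f => pred_atoms f
  | _ => []
  end.

Fixpoint no_pto {P} (f : form P) : Prop :=
  match f with
  | FPto _ _ => False
  | FStar f g | FOr f g => no_pto f /\ no_pto g
  | FEx _ f => no_pto f
  | _ => True
  end.

(* P(phi): predicates reachable (reflexively) from those of phi via rule bodies *)
Inductive reach (R : list (rule nat)) (phi : form nat) : nat -> Prop :=
| reach_base p ts : In (p, ts) (pred_atoms phi) -> reach R phi p
| reach_step q r p ts :
    reach R phi q -> In r R -> r_pred r = q ->
    In (p, ts) (pred_atoms (r_body r)) -> reach R phi p.

Definition progressing (kappa : nat) (r : rule nat) : Prop :=
  NoDup (r_params r) /\
  exists x1 xs ys rho,
    r_params r = x1 :: xs /\
    r_body r = FStar (FPto (V x1) ys) rho /\
    length ys = kappa /\ no_pto rho.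

(* the rule has exactly mu existential variables (variables of the body
   that are not parameters) *)
Definition n_exvars (mu : nat) (r : rule nat) : Prop :=
  exists l, NoDup l /\ length l = mu /\
    forall y, In y l <-> (In y (fv (r_body r)) /\ ~ In y (r_params r)).

Definition connected {P} (r : rule P) : Prop :=
  exists x1 xs ts rho,
    r_params r = x1 :: xs /\
    r_body r = FStar (FPto (V x1) ts) rho /\
    no_pto rho /\
    forall q args, In (q, args) (pred_atoms rho) ->
      exists a rest, args = a :: rest /\ In a ts.

Inductive hsym := Hat (p : nat) | BotP.

Fixpoint hat_f (ws : list var) (f : form nat) : form hsym :=
  match f with
  | FNeq t1 t2 => FNeq t1 t2
  | FEq t1 t2 => FEq t1 t2
  | FPto t ts => FPto t ts
  | FPred p ts => FPred (Hat p) (ts ++ map V ws)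
  | FStar f g => FStar (hat_f ws f) (hat_f ws g)
  | FOr f g => FOr (hat_f ws f) (hat_f ws g)
  | FEx x f => FEx x (hat_f ws f)
  end.

Fixpoint sublook (sigma : list (var * var)) (x : var) : var :=
  match sigma with
  | [] => x
  | (a, b) :: t => if Nat.eqb a x then b else sublook t x
  end.

Definition subst_t (sigma : list (var * var)) (t : term) : term :=
  match t with Bot => Bot | V x => V (sublook sigma x) end.

Fixpoint subst_f {P} (sigma : list (var * var)) (f : form P) : form P :=
  match f with
  | FNeq t1 t2 => FNeq (subst_t sigma t1) (subst_t sigma t2)
  | FEq t1 t2 => FEq (subst_t sigma t1) (subst_t sigma t2)
  | FPto t ts => FPto (subst_t sigma t) (map (subst_t sigma) ts)
  | FPred p ts => FPred p (map (subst_t sigma) ts)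
  | FStar f g => FStar (subst_f sigma f) (subst_f sigma g)
  | FOr f g => FOr (subst_f sigma f) (subst_f sigma g)
  | FEx x f => FEx x (subst_f (filter (fun xw => negb (Nat.eqb (fst xw) x)) sigma) f)
  end.

Definition star_list {P} (base : form P) (fs : list (form P)) : form P :=
  fold_left (fun acc g => FStar acc g) fs base.

Definition bot_rule (k : nat) : rule hsym :=
  mkRule BotP [0] (FPto (V 0) (repeat Bot k)).

(* \hat p(x1..xn, w) <= x1 |-> (y1..y_kappa, w, z1..z_mu)sigma * \hat rho sigma
                         * *_{i in I} bot(z_i) * *_{x in dom sigma} x = sigma(x)
   (indices of I are 0-based: I subset {0..mu-1}) *)
Definition hat_rule (ws zs : list var) (sigma : list (var * var)) (I : list nat)
  (p : nat) (x1 : var) (xs : list var) (ys : list term) (rho : form nat) : rule hsym :=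
  mkRule (Hat p) (x1 :: xs ++ ws)
    (FStar (FPto (V x1) (map (subst_t sigma) (ys ++ map V ws ++ map V zs)))
       (star_list (subst_f sigma (hat_f ws rho))
          (map (fun i => FPred BotP [V (nth i zs 0)]) I ++
           map (fun xw => FEq (V (fst xw)) (V (snd xw))) sigma))).

(* R_r (as a set of rules; all choices of fresh z's, equivalent up to renaming) *)
Definition Rr (kappa mu : nat) (R : list (rule nat)) (psi : form nat)
  (ws : list var) (r : rule hsym) : Prop :=
  r = bot_rule (kappa + length ws + mu) \/
  exists p x1 xs ys rho zs sigma I,
    In (mkRule p (x1 :: xs) (FStar (FPto (V x1) ys) rho)) R /\
    reach R psi p /\
    NoDup zs /\ length zs = mu /\
    (forall z, In z zs ->
       ~ In z (x1 :: xs) /\ ~ In z (allvars (FStar (FPto (V x1) ys) rho)) /\ ~ In z ws) /\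
    NoDup (map fst sigma) /\
    (forall xw, In xw sigma ->
       In (fst xw) (fv rho) /\ fst xw <> x1 /\ In (snd xw) ws) /\
    NoDup I /\ (forall i, In i I -> i < mu) /\
    r = hat_rule ws zs sigma I p x1 xs ys rho /\
    connected r.

(* heaps: partial maps loc -> loc^k (finiteness etc. imposed separately) *)
Definition heap := loc -> option (list loc).

Definition is_heap (h : heap) : Prop :=
  (exists dom : list loc, forall l, h l <> None -> In l dom) /\ h lbot = None.

Definition emp (h : heap) : Prop := forall l, h l = None.

Definition hunion (h1 h2 h : heap) : Prop :=
  forall l, (h1 l = None \/ h2 l = None) /\
            h l = match h1 l with Some v => Some v | None => h2 l end.

Definition eval (s : var -> loc) (t : term) : loc :=
  match t with Bot => lbot | V x => s x end.

Definition upd (s : var -> loc) (x : var) (l : loc) : var -> loc :=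
  fun y => if Nat.eqb y x then l else s y.

(* (s,h) |=_Rs f ; predicate atoms unfold through rules, existential
   variables of the rule are interpreted by an extension of the store
   (values different from l_bot). *)
Inductive sat {P} (Rs : rule P -> Prop) : (var -> loc) -> heap -> form P -> Prop :=
| sat_eq s h t1 t2 : eval s t1 = eval s t2 -> emp h -> sat Rs s h (FEq t1 t2)
| sat_neq s h t1 t2 : eval s t1 <> eval s t2 -> emp h -> sat Rs s h (FNeq t1 t2)
| sat_pto s h t ts :
    eval s t <> lbot ->
    h (eval s t) = Some (map (eval s) ts) ->
    (forall l, l <> eval s t -> h l = None) ->
    sat Rs s h (FPto t ts)
| sat_pred s h p ts r s' :
    Rs r -> r_pred r = p ->
    Forall2 (fun x t => s' x = eval s t) (r_params r) ts ->
    (forall y, ~ In y (r_params r) -> s' y <> lbot) ->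
    sat Rs s' h (r_body r) ->
    sat Rs s h (FPred p ts)
| sat_star s h h1 h2 f g :
    hunion h1 h2 h -> sat Rs s h1 f -> sat Rs s h2 g -> sat Rs s h (FStar f g)
| sat_or_l s h f g : sat Rs s h f -> sat Rs s h (FOr f g)
| sat_or_r s h f g : sat Rs s h g -> sat Rs s h (FOr f g)
| sat_ex s h x f l : l <> lbot -> sat Rs (upd s x l) h f -> sat Rs s h (FEx x f).

(* Main.v *)
Require Import Defs.
From Stdlib Require Import List Arith Lia.
Import ListNotations.

Fixpoint topbots (f : form hsym) : list term :=
  match f with
  | FPred BotP ts => ts
  | FStar f g | FOr f g => topbots f ++ topbots g
  | FEx _ f => topbots f
  | _ => []
  end.

Fixpoint nobot (f : form hsym) : Prop :=
  match f with
  | FPred BotP _ => False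
  | FStar f g | FOr f g => nobot f /\ nobot g
  | FEx _ f => nobot f
  | _ => True
  end.

Fixpoint wf (ws : list var) (f : form hsym) : Prop :=
  match f with
  | FPto t ts => exists w, In w ws /\ In (V w) ts
  | FStar f g | FOr f g => wf ws f /\ wf ws g
  | FEx _ f => wf ws f /\ topbots f = []
  | FPred (Hat _) ts => exists ts0 ws', ts = ts0 ++ map V ws' /\
       length ws' = length ws /\ forall w, In w ws' -> In w ws
  | _ => True
  end.

Lemma nobot_topbots f : nobot f -> topbots f = [].
Proof.
  induction f; simpl; try tauto.
  - destruct p; simpl; tauto.
  - intros [A B]; rewrite IHf1, IHf2; auto.
  - intros [A B]; rewrite IHf1, IHf2; auto.
Qed.

Lemma nobot_hat ws f : nobot (hat_f ws f).
Proof. induction f; simpl; auto. Qed.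

Lemma nopto_hat ws f : no_pto f -> no_pto (hat_f ws f).
Proof. induction f; simpl; tauto. Qed.

Lemma wf_hat ws f : no_pto f -> wf ws (hat_f ws f).
Proof.
  induction f; simpl; try tauto.
  - intros _. exists ts, ws. auto.
  - intros A; split; auto. apply nobot_topbots, nobot_hat.
Qed.

Lemma nobot_subst f : forall sigma, nobot f -> nobot (subst_f sigma f).
Proof.
  induction f; simpl; intros; auto; try tauto.
  - destruct H; split; auto.
  - destruct H; split; auto.
Qed.

Lemma nopto_subst {P} (f : form P) : forall sigma, no_pto f -> no_pto (subst_f sigma f).
Proof.
  induction f; simpl; intros; auto; try tauto.
  - destruct H; split; auto.
  - destruct H; split; auto.
Qed.

Lemma topbots_star_list gs : forall b,
  topbots (star_list b gs) = topbots b ++ flat_map topbots gs.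
Proof.
  induction gs; intros b; unfold star_list in *; simpl.
  - rewrite app_nil_r; auto.
  - rewrite IHgs. simpl. rewrite app_assoc; auto.
Qed.

Lemma wf_star_list ws gs : forall b,
  wf ws b -> (forall g, In g gs -> wf ws g) -> wf ws (star_list b gs).
Proof.
  induction gs; intros b Hb Hg; unfold star_list in *; simpl; auto.
  apply IHgs.
  - simpl; split; [auto| apply Hg; simpl; auto].
  - intros; apply Hg; simpl; auto.
Qed.

Lemma sublook_cases sigma x : sublook sigma x = x \/ In (sublook sigma x) (map snd sigma).
Proof.
  induction sigma as [|[a b] t IH]; simpl; auto.
  destruct (Nat.eqb a x); simpl; auto.
  destruct IH; auto.
Qed.

Lemma sublook_notin sigma x : (forall xw, In xw sigma -> fst xw <> x) -> sublook sigma x = x.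
Proof.
  induction sigma as [|[a b] t IH]; simpl; auto.
  intros H. destruct (Nat.eqb_spec a x).
  - exfalso. apply (H (a,b)); auto.
  - apply IH; intros; apply H; auto.
Qed.

Lemma fv_allvars {P} (f : form P) y : In y (fv f) -> In y (allvars f).
Proof.
  induction f; simpl; auto; intros H.
  - apply in_app_or in H; apply in_or_app; tauto.
  - apply in_app_or in H; apply in_or_app; tauto.
  - apply in_remove in H; right; tauto.
Qed.

Lemma Forall2_app_tail {A B} (Rl : A -> B -> Prop) a b c d :
  Forall2 Rl (a ++ b) (c ++ d) -> length b = length d -> Forall2 Rl b d.
Proof.
  intros H Hl.
  assert (length a = length c).
  { apply Forall2_length in H. rewrite !length_app in H. lia. }
  revert c H H0. induction a; intros c H Hac; destruct c; simpl in *; try discriminate; auto.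
  inversion H; subst. apply (IHa c); auto.
Qed.

Lemma Forall2_map_V (s s' : var -> loc) l :
  Forall2 (fun x t => s' x = eval s t) l (map V l) -> forall w, In w l -> s' w = s w.
Proof.
  induction l; simpl; intros H w Hw; [contradiction|].
  inversion H; subst. destruct Hw; subst; auto.
Qed.

Lemma pto_nonbot ws (s : var -> loc) ts w K :
  (forall w, In w ws -> s w <> lbot) -> In w ws -> In (V w) ts ->
  map (eval s) ts <> repeat lbot K.
Proof.
  intros Hs Hw Hin E.
  assert (In (eval s (V w)) (map (eval s) ts)) by (apply in_map; auto).
  rewrite E in H. apply repeat_spec in H. simpl in H. apply (Hs w); auto.
Qed.

Lemma sublook_in ws sigma x : (forall xw, In xw sigma -> In (snd xw) ws) -> In x ws ->
  In (sublook sigma x) ws.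
Proof.
  intros Hs Hx. destruct (sublook_cases sigma x) as [E|E]; [rewrite E; auto|].
  apply in_map_iff in E. destruct E as [xw [E1' E2']]. rewrite <- E1'. apply Hs; auto.
Qed.

Lemma wf_subst_hat ws rho : forall sigma, no_pto rho ->
  (forall xw, In xw sigma -> In (snd xw) ws) -> wf ws (subst_f sigma (hat_f ws rho)).
Proof.
  induction rho; simpl; intros sigma Hp Hs; try tauto.
  - exists (map (subst_t sigma) ts), (map (sublook sigma) ws).
    rewrite map_app, !map_map. split; [reflexivity|].
    split; [rewrite length_map; auto|].
    intros w Hw. apply in_map_iff in Hw. destruct Hw as [w' [E Hw']]; subst.
    apply sublook_in; auto.
  - destruct Hp; split; auto.
  - destruct Hp; split; auto.
  - split.
    + apply IHrho; auto. intros xw Hxw. apply filter_In in Hxw. apply Hs; tauto.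
    + apply nobot_topbots, nobot_subst, nobot_hat.
Qed.

Lemma Forall2_ws (s s' : var -> loc) ws : forall l l',
  Forall2 (fun x t => s' x = eval s t) l (map V l') ->
  (forall w, In w l' -> In w ws) -> (forall w, In w ws -> s w <> lbot) ->
  forall w, In w l -> s' w <> lbot.
Proof.
  induction l; intros l' H Hl' Hs w Hw; [contradiction|].
  destruct l' as [|b l']; inversion H; subst.
  destruct Hw as [Hw|Hw].
  - subst. rewrite H3. simpl. apply Hs, Hl'. simpl; auto.
  - apply (IHl l'); auto. intros; apply Hl'; simpl; auto.
Qed.

Definition Conn (kappa nu mu : nat) (h : heap) (l : loc) :=
  exists l' v, h l' = Some v /\ v <> repeat lbot (kappa+nu+mu) /\
    exists i, i < mu /\ nth (kappa + nu + i) v lbot = l.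

Lemma Conn_sub kappa nu mu (h1 h : heap) l :
  (forall l v, h1 l = Some v -> h l = Some v) -> Conn kappa nu mu h1 l -> Conn kappa nu mu h l.
Proof.
  intros Hs (l' & v & A & B & C). exists l', v; auto.
Qed.

Lemma main_ind kappa mu R psi ws
  (HR_prog : forall r, In r R -> progressing kappa r) (Hws : ws <> []) :
  forall s h f, sat (Rr kappa mu R psi ws) s h f ->
  (forall w, In w ws -> s w <> lbot) -> wf ws f ->
  forall lc, h lc = Some (repeat lbot (kappa + length ws + mu)) ->
  Conn kappa (length ws) mu h lc \/ In lc (map (eval s) (topbots f)).
Proof.
  intros s h f H. induction H; intros Hs Hwf lc Hl.
  - rewrite H0 in Hl; discriminate.
  - rewrite H0 in Hl; discriminate.
  - simpl in Hwf. destruct Hwf as [w [Hw Hin]].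
    destruct (Nat.eq_dec lc (eval s t)).
    + subst. rewrite H0 in Hl. injection Hl; intro E. exfalso.
      exact (pto_nonbot ws s ts w _ Hs Hw Hin E).
    + rewrite H1 in Hl; auto; discriminate.
  - destruct H as [Hbot | Hhat].
    + subst r. simpl in H0. subst p. simpl in H1.
      inversion H1 as [|? ? ? ? Ht Hnil]; subst. inversion Hnil; subst.
      simpl in H3. inversion H3; subst. right. simpl.
      destruct (Nat.eq_dec lc (s' 0)).
      * left. simpl in Ht. congruence.
      * simpl in *. match goal with HH : forall l, l <> _ -> h l = None |- _ => rewrite HH in Hl; auto; discriminate end.
    + destruct Hhat as (q & x1 & xs & ys & rho & zs & sigma & I & HinR & Hreach & Hzsnd
        & Hzslen & Hzfresh & Hsignd & Hsig & HInd & HI & Hr & Hconn).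
      subst r. simpl in H0. subst p. left.
      destruct (HR_prog _ HinR) as [_ (x1' & xs' & ys' & rho' & E1 & E2 & Hlen & Hnp)].
      simpl in E1, E2. injection E2 as E3 E4 E5. subst x1 ys rho. injection E1 as E6. subst xs.
      simpl in H1.
      assert (Hs' : forall w, In w ws -> s' w <> lbot).
      { simpl in Hwf. destruct Hwf as (ts0 & ws' & Ets & Hlws & Hws').
        subst ts.
        assert (F : Forall2 (fun x t => s' x = eval s t) ws (map V ws')).
        { apply (Forall2_app_tail _ (x1' :: xs') ws ts0 (map V ws')).
          exact H1. rewrite length_map; auto. }
        intros w Hw. exact (Forall2_ws s s' ws ws ws' F Hws' Hs w Hw). }
      assert (exists w0, In w0 ws) as [w0 Hw0]
        by (destruct ws; [congruence| eexists; left; eauto]).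
      assert (Hsw0 : In (sublook sigma w0) ws).
      { apply sublook_in; auto. intros xw Hxw; apply (Hsig xw Hxw). }
      assert (Hwfb : wf ws (r_body (hat_rule ws zs sigma I q x1' xs' ys' rho'))).
      { simpl. split.
        - exists (sublook sigma w0). split; auto.
          change (V (sublook sigma w0)) with (subst_t sigma (V w0)).
          apply in_map. apply in_or_app; right; apply in_or_app; left.
          apply in_map; auto.
        - apply wf_star_list.
          + apply wf_subst_hat; [exact Hnp|]. intros xw Hxw; apply (Hsig xw Hxw).
          + intros g Hg. apply in_app_or in Hg. destruct Hg as [Hg|Hg];
              apply in_map_iff in Hg; destruct Hg as [? [Hg _]]; subst; simpl; auto. }
      destruct (IHsat Hs' Hwfb lc Hl) as [Hc | Hin]; [exact Hc|].
      simpl in Hin. rewrite topbots_star_list in Hin.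
      rewrite nobot_topbots in Hin by (apply nobot_subst, nobot_hat).
      simpl in Hin. apply in_map_iff in Hin. destruct Hin as [t [Et Ht]].
      apply in_flat_map in Ht. destruct Ht as [g [Hg Htg]].
      apply in_app_or in Hg. destruct Hg as [Hg|Hg]; apply in_map_iff in Hg;
        destruct Hg as [i [Hg Hi]]; subst g; simpl in Htg; [|contradiction].
      destruct Htg as [Htg|[]]. subst t. simpl in Et.
      simpl in H3. inversion H3 as [| | | | ? ? h1 h2 ? ? Hun Hs1 Hs2 | | |]; subst.
      inversion Hs1; subst.
      set (v := map (eval s') (map (subst_t sigma) (ys' ++ map V ws ++ map V zs))) in *.
      exists (eval s' (V x1')), v. split.
      { destruct (Hun (eval s' (V x1'))) as [_ E]. rewrite E. match goal with HH : h1 (eval s' (V x1')) = Some _ |- _ => rewrite HH end. auto. }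
      split.
      { unfold v. intro E.
        assert (HIN : In (V (sublook sigma w0)) (map (subst_t sigma) (ys' ++ map V ws ++ map V zs))).
        { change (V (sublook sigma w0)) with (subst_t sigma (V w0)).
          apply in_map. apply in_or_app; right; apply in_or_app; left.
          apply in_map; auto. }
        exact (pto_nonbot ws s' _ (sublook sigma w0) _ Hs' Hsw0 HIN E). }
      exists i. split; [apply HI; auto|].
      unfold v. rewrite map_map, !map_app.
      try rewrite <- Hlen. rewrite <- (length_map (fun x => eval s' (subst_t sigma x)) ys').
      rewrite <- Nat.add_assoc, app_nth2_plus.
      rewrite app_nth2 by (rewrite !length_map; lia). rewrite !length_map.
      replace (length ws + i - length ws) with i by lia. rewrite map_map.
      assert (Hi' : i < length zs) by (try rewrite Hzslen; apply HI; auto).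
      rewrite (nth_indep _ lbot ((fun x => eval s' (subst_t sigma (V x))) 0))
        by (rewrite length_map; auto).
      transitivity ((fun x => eval s' (subst_t sigma (V x))) (nth i zs 0)); [exact (map_nth (fun x => eval s' (subst_t sigma (V x))) zs 0 i)|].
      simpl. rewrite sublook_notin; auto.
      intros xw Hxw E. destruct (Hsig xw Hxw) as [Hf _].
      destruct (Hzfresh (nth i zs 0) (nth_In _ _ Hi')) as [_ [Hn _]].
      apply Hn. simpl. right. apply in_or_app. right. rewrite <- E.
      apply fv_allvars; auto.
  - simpl in Hwf. destruct Hwf as [W1 W2].
    destruct (H lc) as [_ E]. rewrite E in Hl.
    destruct (h1 lc) eqn:E1.
    + injection Hl; intro; subst.
      destruct (IHsat1 Hs W1 lc E1) as [C|C].
      * left. eapply Conn_sub; [|exact C]. intros l0 v0 Hv. destruct (H l0) as [_ E']. rewrite E', Hv; auto.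
      * right. simpl. rewrite map_app. apply in_or_app; auto.
    + destruct (IHsat2 Hs W2 lc Hl) as [C|C].
      * left. eapply Conn_sub; [|exact C]. intros l0 v0 Hv. destruct (H l0) as [D E'].
        rewrite E'. destruct D as [D|D]; [rewrite D; auto|congruence].
      * right. simpl. rewrite map_app. apply in_or_app; auto.
  - simpl in Hwf. destruct Hwf as [W1 W2].
    destruct (IHsat Hs W1 lc Hl) as [C|C]; auto.
    right. simpl. rewrite map_app. apply in_or_app; auto.
  - simpl in Hwf. destruct Hwf as [W1 W2].
    destruct (IHsat Hs W2 lc Hl) as [C|C]; auto.
    right. simpl. rewrite map_app. apply in_or_app; auto.
  - simpl in Hwf. destruct Hwf as [W1 W2].
    assert (Hs2 : forall w, In w ws -> upd s x l w <> lbot).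
    { intros w Hw. unfold upd. destruct (Nat.eqb w x); auto. }
    destruct (IHsat Hs2 W1 lc Hl) as [C|C]; auto.
    rewrite W2 in C. contradiction.
Qed.

Theorem mainTheorem17
  (kappa nu mu : nat) (R : list (rule nat)) (psi : form nat) (ws : list var)
  (HR_prog : forall r, In r R -> progressing kappa r)
  (HR_mu : forall r, In r R -> n_exvars mu r)
  (Hws_len : length ws = nu) (Hnu : 0 < nu) (Hws_nodup : NoDup ws)
  (Hws_fresh : forall w r, In w ws -> In r R ->
      ~ In w (r_params r) /\ ~ In w (allvars (r_body r)))
  (alpha : form nat) (Halpha_pto : no_pto alpha)
  (Halpha_P : forall p, reach R alpha p -> reach R psi p)
  (s : var -> loc) (Hs : forall x, s x <> lbot)
  (h' : heap) (Hh' : is_heap h')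
  (Hh'_len : forall l v, h' l = Some v -> length v = kappa + nu + mu)
  (Hsat : sat (Rr kappa mu R psi ws) s h' (hat_f ws alpha)) :
  forall l, h' l = Some (repeat lbot (kappa + nu + mu)) ->
  exists l' v, h' l' = Some v /\ v <> repeat lbot (kappa + nu + mu) /\
    exists i, i < mu /\ nth (kappa + nu + i) v lbot = l.
Proof.
  intros l Hl. subst nu.
  assert (Hws : ws <> []) by (destruct ws; simpl in *; [lia|discriminate]).
  destruct (main_ind kappa mu R psi ws HR_prog Hws s h' _ Hsat) with (lc := l)
    as [C|C]; auto.
  - apply wf_hat; auto.
  - rewrite nobot_topbots in C by apply nobot_hat. contradiction.
Qed.
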